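(* Let $(u_S,u_R)$ be a transparent environment satisfying no-duplicate-actions. If commitment has no value, then there exists a simple babbling cheap-talk equilibrium $(\sigma,\rho)$ with $U_S(\sigma,\rho)$ equal to the persuasion payoff.
   Context: $A$ and $\Omega$ are finite nonempty sets, $\mu_0$ a prior on $\Omega$ with $\mu_0(\omega)>0$ for all $\omega$, $M$ a finite message set with $|M|>\max\{|\Omega|,|A|\}$. An environment is a pair of functions $u_S,u_R:A\times\Omega\to[0,1]$. It is transparent if there is $v:A\to\mathbb R$ with $u_S(a,\omega)=v(a)$ for all $a,\omega$; it satisfies no-duplicate-actions if $v(a)\ne v(a')$ for all $a\ne a'$. Messaging strategies $\sigma:\Omega\to\Delta M$, action strategies $\rho:M\to\Delta A$, $U_i(\sigma,\rho)=\sum_{\omega,m,a}\mu_0(\omega)\sigma(m|\omega)\rho(a|m)u_i(a,\omega)$. $(\sigma,\rho)$ is S-BR if $\sigma\in\arg\max_{\sigma'}U_S(\sigma',\rho)$ and R-BR if $\rho\in\arg\max_{\rho'}U_R(\sigma,\rho')$; a cheap-talk equilibrium is both. Persuasion payoff: max of $U_S$ over R-BR profiles; cheap-talk payoff: max over cheap-talk equilibria; commitment has no value if they are equal. $M_\sigma=\{m:\sigma(m|\omega)>0\text{ for some }\omega\}$. A simple babbling cheap-talk equilibrium is a cheap-talk equilibrium $(\sigma,\rho)$ with $|M_\sigma|=1$ and some $a_0\in A$ such that $\rho(a_0|m)=1$ for all $m\in M$. *)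

(* Defs.v *)
From mathcomp Require Import all_boot all_order all_algebra.
From mathcomp Require Import reals.
Set Implicit Arguments. Unset Strict Implicit. Unset Printing Implicit Defensive.
Import Order.TTheory GRing.Theory Num.Theory.
Local Open Scope ring_scope.

Section CheapTalk.
Variables (R : realType) (A Om M : finType).

Definition is_distr (T : finType) (p : T -> R) : Prop :=
  (forall t, 0 <= p t) /\ \sum_(t : T) p t = 1.

Definition msg_strat (sigma : Om -> M -> R) : Prop :=
  forall w, is_distr (sigma w).
Definition act_strat (rho : M -> A -> R) : Prop :=
  forall m, is_distr (rho m).

Definition payoff (mu0 : Om -> R) (u : A -> Om -> R)
    (sigma : Om -> M -> R) (rho : M -> A -> R) : R :=
  \sum_(w : Om) \sum_(m : M) \sum_(a : A) mu0 w * sigma w m * rho m a * u a w.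

Definition S_BR mu0 (uS : A -> Om -> R) sigma rho : Prop :=
  forall sigma', msg_strat sigma' -> payoff mu0 uS sigma' rho <= payoff mu0 uS sigma rho.
Definition R_BR mu0 (uR : A -> Om -> R) sigma rho : Prop :=
  forall rho', act_strat rho' -> payoff mu0 uR sigma rho' <= payoff mu0 uR sigma rho.

Definition profile sigma rho : Prop := msg_strat sigma /\ act_strat rho.

Definition cheap_talk_eq mu0 uS uR sigma rho : Prop :=
  profile sigma rho /\ S_BR mu0 uS sigma rho /\ R_BR mu0 uR sigma rho.

Definition is_persuasion_payoff mu0 uS uR (v : R) : Prop :=
  (exists sigma rho, profile sigma rho /\ R_BR mu0 uR sigma rho
                     /\ payoff mu0 uS sigma rho = v) /\
  (forall sigma rho, profile sigma rho -> R_BR mu0 uR sigma rho ->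
                     payoff mu0 uS sigma rho <= v).

Definition is_cheap_talk_payoff mu0 uS uR (v : R) : Prop :=
  (exists sigma rho, cheap_talk_eq mu0 uS uR sigma rho
                     /\ payoff mu0 uS sigma rho = v) /\
  (forall sigma rho, cheap_talk_eq mu0 uS uR sigma rho ->
                     payoff mu0 uS sigma rho <= v).

Definition commitment_no_value mu0 uS uR : Prop :=
  exists v, is_persuasion_payoff mu0 uS uR v /\ is_cheap_talk_payoff mu0 uS uR v.

Definition transparent (uS : A -> Om -> R) : Prop :=
  exists v : A -> R, forall a w, uS a w = v a.

Definition no_duplicate_actions (uS : A -> Om -> R) : Prop :=
  exists v : A -> R, (forall a w, uS a w = v a) /\ (forall a a', a != a' -> v a != v a').

Definition M_sigma (sigma : Om -> M -> R) : {set M} :=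
  [set m | [exists w, 0 < sigma w m]].

Definition simple_babbling_eq mu0 uS uR sigma rho : Prop :=
  cheap_talk_eq mu0 uS uR sigma rho /\ #|M_sigma sigma| = 1%N /\
  exists a0 : A, forall m : M, rho m a0 = 1.

End CheapTalk.

(* Main.v *)
Require Import Defs.
From mathcomp Require Import all_boot all_order all_algebra.
From mathcomp Require Import reals.
From mathcomp Require Import ring lra.
Import Order.TTheory GRing.Theory Num.Theory.
Local Open Scope ring_scope.
Set Implicit Arguments. Unset Strict Implicit. Unset Printing Implicit Defensive.

Lemma exmax (R : realType) (T : finType) (f : T -> R) (t0 : T) :
  exists t, forall t', f t' <= f t.
Proof.
exists [arg max_(i > t0) f i]%O.
case: arg_maxP => // i _ H t'; exact: H.
Qed.

Section H.
Variables (R : realType) (A Om M : finType) (mu0 : Om -> R).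

Definition HH (sigma : Om -> M -> R) (u : A -> Om -> R) m a :=
  \sum_(w : Om) mu0 w * sigma w m * u a w.

Lemma payoffE u sigma (rho : M -> A -> R) :
  payoff mu0 u sigma rho = \sum_m \sum_a rho m a * HH sigma u m a.
Proof.
rewrite /payoff exchange_big /=; apply eq_bigr => m _.
rewrite exchange_big /=; apply eq_bigr => a _.
rewrite /HH mulr_sumr; apply eq_bigr => w _; ring.
Qed.

Lemma payoff_upd u sigma (rho rho' : M -> A -> R) m :
  (forall m', m' != m -> rho' m' = rho m') ->
  payoff mu0 u sigma rho' - payoff mu0 u sigma rho =
  \sum_a (rho' m a - rho m a) * HH sigma u m a.
Proof.
move=> Hr; rewrite !payoffE -sumrB (bigD1 m) //= [X in _ + X]big1 ?addr0.
  by rewrite -sumrB; apply eq_bigr => a _; ring.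
move=> m' Hm; rewrite Hr // subrr //.
Qed.

Definition qq (sigma : Om -> M -> R) m := \sum_w mu0 w * sigma w m.

Lemma payoffT (v : A -> R) u sigma (rho : M -> A -> R) :
  (forall a w, u a w = v a) ->
  payoff mu0 u sigma rho = \sum_m qq sigma m * \sum_a rho m a * v a.
Proof.
move=> hv; rewrite payoffE; apply eq_bigr => m _.
rewrite mulr_sumr; apply eq_bigr => a _.
rewrite /HH /qq mulr_suml mulr_sumr; apply eq_bigr => w _; rewrite hv; ring.
Qed.

End H.

Lemma distr_pos (R : realType) (T : finType) (p : T -> R) :
  is_distr p -> exists t, 0 < p t.
Proof.
move=> [p0 p1]; case: (boolP [exists t, 0 < p t]) => [/existsP [t Ht]|/existsPn Hn].
  by exists t.
have : \sum_t p t <= \sum_(t : T) (0:R).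
  by apply: ler_sum => t _; rewrite leNgt Hn.
by rewrite big1_eq p1 ler10.
Qed.

Lemma sum_delta (R : realType) (T : finType) (t0 : T) (F : T -> R) :
  \sum_t (t == t0)%:R * F t = F t0.
Proof.
rewrite (bigD1 t0) //= eqxx mul1r big1 ?addr0 // => t /negbTE ->; by rewrite mul0r.
Qed.

Lemma sum_delta1 (R : realType) (T : finType) (t0 : T) :
  \sum_t ((t == t0)%:R : R) = 1.
Proof.
rewrite -[RHS](sum_delta t0 (fun _ => 1:R)); apply eq_bigr => t _; by rewrite mulr1.
Qed.

Lemma delta_distr (R : realType) (T : finType) (t0 : T) :
  is_distr (fun t => ((t == t0)%:R : R)).
Proof. split; [move=> t; exact: ler0n | exact: sum_delta1]. Qed.

Lemma sum0_ge0 (R : realType) (T : finType) (F : T -> R) :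
  (forall t, 0 <= F t) -> \sum_t F t = 0 -> forall t, F t = 0.
Proof. move=> H1 H2 t; exact: (psumr_eq0P (P := xpredT) (fun i _ => H1 i) H2). Qed.

Theorem lemma12 (R : realType) (A Om M : finType)
  (mu0 : Om -> R) (uS uR : A -> Om -> R) :
  (0 < #|A|)%N -> (0 < #|Om|)%N ->
  (maxn #|Om| #|A| < #|M|)%N ->
  (forall w, 0 < mu0 w) -> \sum_(w : Om) mu0 w = 1 ->
  (forall a w, 0 <= uS a w <= 1) -> (forall a w, 0 <= uR a w <= 1) ->
  transparent uS -> no_duplicate_actions uS ->
  commitment_no_value M mu0 uS uR ->
  exists (sigma : Om -> M -> R) (rho : M -> A -> R),
    simple_babbling_eq mu0 uS uR sigma rho /\
    is_persuasion_payoff M mu0 uS uR (payoff mu0 uS sigma rho).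
Proof.
move=> _ hOm _ mu_pos mu_sum _ _ _ [v [hv vinj]]
  [V [Vpers [[s [r [[[sprof rprof] [sbr rbr]] eqV]]] _]]].
have Vmax := Vpers.2.
have payS := fun (s1 : Om -> M -> R) (r1 : M -> A -> R) => @payoffT _ _ _ _ mu0 v uS s1 r1 hv.
have qq_sum : forall s' : Om -> M -> R, msg_strat s' -> \sum_m qq mu0 s' m = 1.
  move=> s' hs'; rewrite /qq exchange_big /=.
  under eq_bigr => w _ do rewrite -mulr_sumr (hs' w).2 mulr1.
  exact: mu_sum.
have qq_ge0 : forall m, 0 <= qq mu0 s m.
  move=> m; apply: sumr_ge0 => w _; apply: mulr_ge0; [exact: ltW | exact: (sprof w).1].
have used_pos : forall w m, 0 < s w m -> 0 < qq mu0 s m.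
  move=> w m Hw; rewrite /qq (bigD1 w) //=.
  have h1 : 0 < mu0 w * s w m by apply: mulr_gt0.
  have h2 : 0 <= \sum_(i | i != w) mu0 i * s i m.
    apply: sumr_ge0 => i _; apply: mulr_ge0; [exact: ltW | exact: (sprof i).1].
  lra.
pose g m := \sum_a r m a * v a.
have [w0 _] : exists w0 : Om, true by case/card_gt0P: hOm => w0 _; exists w0.
have [m0 Hm0] := distr_pos (sprof w0).
have [mstar Hmstar] := exmax g m0.
pose s' := fun (w : Om) m => ((m == mstar)%:R : R).
have s'prof : msg_strat s' by move=> w; exact: delta_distr.
have qq_s' : forall m, qq mu0 s' m = (m == mstar)%:R.
  by move=> m; rewrite /qq -mulr_suml mu_sum mul1r.
have Hs' := sbr s' s'prof.
have e1 : payoff mu0 uS s' r = g mstar.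
  rewrite payS; under eq_bigr => m _ do rewrite qq_s'.
  exact: sum_delta.
rewrite e1 payS in Hs'.
pose P := \sum_m qq mu0 s m * g m.
have hsum : \sum_m qq mu0 s m * (g mstar - g m) = g mstar - P.
  under eq_bigr => m _ do rewrite mulrBr.
  by rewrite sumrB -mulr_suml qq_sum // mul1r.
have hz := @sum0_ge0 _ _ (fun m => qq mu0 s m * (g mstar - g m)) (fun m => mulr_ge0 (qq_ge0 m) (eq_ind _ is_true (Hmstar m) _ (esym (subr_ge0 _ _)))).
have hP : P = g mstar.
  have : \sum_m qq mu0 s m * (g mstar - g m) >= 0.
    by apply: sumr_ge0 => m _; apply: mulr_ge0 => //; rewrite subr_ge0.
  rewrite hsum /P; lra.
have gused : forall w m, 0 < s w m -> g m = g mstar.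
  move=> w m Hw; have hq := used_pos _ _ Hw.
  have /eqP := hz (ltac:(by rewrite hsum hP subrr)) m.
  rewrite mulf_eq0 => /orP [/eqP hq0|/eqP h0]; lra.
have HS : forall m a, HH mu0 s uS m a = qq mu0 s m * v a.
  by move=> m a; rewrite /HH /qq mulr_suml; apply eq_bigr => w _; rewrite hv.
pose hR m a := HH mu0 s uR m a.
have claim1 : forall w m b, 0 < s w m -> (forall a', hR m a' <= hR m b) ->
   v b <= g m /\ \sum_a r m a * hR m a = hR m b.
  move=> w m b Hw Hb.
  pose r' := fun m' => if m' == m then (fun a => ((a == b)%:R : R)) else r m'.
  have r'prof : act_strat r'.
    by move=> m'; rewrite /r'; case: eqP => _; [exact: delta_distr | exact: rprof].
  have upd : forall m', m' != m -> r' m' = r m'.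
    by move=> m' /negbTE; rewrite /r' => ->.
  have r'm : r' m = (fun a => (a == b)%:R) by rewrite /r' eqxx.
  have dR := @payoff_upd _ _ _ _ mu0 uR s r r' m upd; rewrite r'm in dR.
  have e2 : \sum_a ((a == b)%:R - r m a) * HH mu0 s uR m a = hR m b - \sum_a r m a * hR m a.
    under eq_bigr => a _ do rewrite mulrBl.
    by rewrite sumrB sum_delta.
  have le1 : \sum_a r m a * hR m a <= hR m b.
    apply: le_trans (_ : \sum_a r m a * hR m b <= _).
      by apply: ler_sum => a _; apply: ler_wpM2l; [exact: (rprof m).1 | exact: Hb].
    by rewrite -mulr_suml (rprof m).2 mul1r.
  have le2 := rbr r' r'prof.
  have eqs : \sum_a r m a * hR m a = hR m b by lra.
  split => //.
  have r'br : R_BR mu0 uR s r'.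
    by move=> r'' h''; have := rbr r'' h''; lra.
  have hV := Vmax s r' (conj sprof r'prof) r'br.
  have dS := @payoff_upd _ _ _ _ mu0 uS s r r' m upd; rewrite r'm in dS.
  have e3 : \sum_a ((a == b)%:R - r m a) * HH mu0 s uS m a = qq mu0 s m * (v b - g m).
    under eq_bigr => a _ do rewrite HS mulrBl.
    rewrite sumrB sum_delta /g mulrBr mulr_sumr; congr (_ - _); apply eq_bigr => a _; ring.
  have hq := used_pos _ _ Hw.
  have : qq mu0 s m * (v b - g m) <= 0 by lra.
  by rewrite pmulr_rle0 // subr_le0.
have claim2 : forall w m a, 0 < s w m -> 0 < r m a ->
    v a = g m /\ forall a', hR m a' <= hR m a.
  move=> w m a Hw Ha.
  have [b Hb] := exmax (hR m) a.
  have [_ eqb] := claim1 w m b Hw Hb.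
  have hz2 : \sum_a r m a * (hR m b - hR m a) = 0.
    under eq_bigr => a1 _ do rewrite mulrBr.
    by rewrite sumrB -mulr_suml (rprof m).2 mul1r eqb subrr.
  have nn : forall a1, 0 <= r m a1 * (hR m b - hR m a1).
    by move=> a1; apply: mulr_ge0; [exact: (rprof m).1 | rewrite subr_ge0; exact: Hb].
  have maxi : forall a1, 0 < r m a1 -> forall a', hR m a' <= hR m a1.
    move=> a1 Ha1 a'; have /eqP := @sum0_ge0 _ _ _ nn hz2 a1.
    rewrite mulf_eq0 (gt_eqF Ha1) /= subr_eq0 => /eqP <-; exact: Hb.
  split; last exact: maxi.
  have vle : forall a1, 0 <= r m a1 * (g m - v a1).
    move=> a1; have := (rprof m).1 a1; rewrite le0r => /orP [/eqP -> | Hp]; first by rewrite mul0r.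
    apply: mulr_ge0; [exact: ltW | rewrite subr_ge0; exact: (claim1 w m a1 Hw (maxi a1 Hp)).1].
  have hz3 : \sum_a r m a * (g m - v a) = 0.
    under eq_bigr => a1 _ do rewrite mulrBr.
    by rewrite sumrB -mulr_suml (rprof m).2 mul1r /g subrr.
  have /eqP := @sum0_ge0 _ _ _ vle hz3 a.
  by rewrite mulf_eq0 (gt_eqF Ha) /= subr_eq0 => /eqP ->.
have [a0 Ha0] := distr_pos (rprof m0).
have [va0 _] := claim2 _ _ _ Hm0 Ha0.
have gm0 := gused _ _ Hm0.
have pP : payoff mu0 uS s r = P := payS s r.
have Vva0 : V = v a0 by rewrite -eqV pP hP va0 gm0.
have a0max : forall m a', hR m a' <= hR m a0.
  move=> m a'; case: (boolP [exists w, 0 < s w m]) => [/existsP [w Hw] | /existsPn Hn].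
    have [a Ha] := distr_pos (rprof m).
    have [va amax] := claim2 _ _ _ Hw Ha.
    have ea : a = a0.
      case: (eqVneq a a0) => // ne; have := vinj _ _ ne.
      by rewrite va va0 (gused _ _ Hw) gm0 eqxx.
    by rewrite -ea.
  have s0 : forall w, s w m = 0.
    by move=> w; apply/eqP; rewrite eq_le (sprof w).1 andbT leNgt Hn.
  by rewrite /hR /HH !big1 // => w _; rewrite s0 mulr0 mul0r.
pose Pr a := \sum_w mu0 w * uR a w.
have PrE : forall a, Pr a = \sum_m hR m a.
  move=> a; rewrite /hR /HH exchange_big /=; apply eq_bigr => w _.
  by rewrite -mulr_suml -mulr_sumr (sprof w).2 mulr1.
have Prmax : forall b, Pr b <= Pr a0.
  by move=> b; rewrite !PrE; apply: ler_sum => m _; exact: a0max.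
pose s0 := fun (w : Om) m => ((m == m0)%:R : R).
pose r0 := fun (m : M) a => ((a == a0)%:R : R).
have s0prof : msg_strat s0 by move=> w; exact: delta_distr.
have r0prof : act_strat r0 by move=> m; exact: delta_distr.
have payS0 : forall s1, msg_strat s1 -> payoff mu0 uS s1 r0 = v a0.
  move=> s1 hs1; rewrite payS; under eq_bigr => m _ do rewrite sum_delta.
  by rewrite -mulr_suml qq_sum // mul1r.
have payR0 : forall r1 : M -> A -> R, payoff mu0 uR s0 r1 = \sum_a r1 m0 a * Pr a.
  move=> r1; rewrite payoffE.
  have hh : forall m a, HH mu0 s0 uR m a = (m == m0)%:R * Pr a.
    by move=> m a; rewrite /HH /Pr mulr_sumr; apply eq_bigr => w _; rewrite /s0; ring.
  under eq_bigr => m _ do under eq_bigr => a _ do rewrite hh mulrCA.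
  under eq_bigr => m _ do rewrite -mulr_sumr.
  exact: sum_delta.
exists s0, r0; split; last by rewrite payS0 // -Vva0.
split; first split; first by [].
  split.
    by move=> s1 hs1; rewrite !payS0.
  move=> r1 hr1; rewrite !payR0 /r0 sum_delta.
  apply: le_trans (_ : \sum_a r1 m0 a * Pr a0 <= _).
    by apply: ler_sum => a _; apply: ler_wpM2l; [exact: (hr1 m0).1 | exact: Prmax].
  by rewrite -mulr_suml (hr1 m0).2 mul1r.
split.
  have -> : M_sigma s0 = [set m0].
    apply/setP => m; rewrite /M_sigma !inE /s0; case: (eqVneq m m0) => [e|ne].
      subst m; by apply/existsP; exists w0; rewrite ltr0n.
    by apply/existsPn => w; rewrite ltr0n.
  exact: cards1.
by exists a0 => m; rewrite /r0 eqxx.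
Qed.
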